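(* For all $n\ge2$ and $m\ge1$, the cardinality sensitivity of affine maximizers for $n$ players and $m$ items satisfies $\mu_c(n,m)\le\lceil m/2\rceil$.
   Context: Players $[n]$, items $[m]$, allocations $\Omega=\{A\in\{0,1\}^{n\times m}:\sum_iA_{i,j}=1\ \forall j\}$; $A_i\in\{0,1\}^m$ denotes the bundle (row) of player $i$. An affine maximizer is $f:\mathbb R^{n\times m}\to\Omega$ with $f(\theta)\in\arg\max_{A\in\Omega}\{c_A+\sum_iw_i\theta_i\cdot A_i\}$ for nonzero weights $w_i$ and reals $c_A$. Difference sets $Q_A=\mathrm{cl}\{\theta:f(\theta)=A\}$; indifference complex $\mathcal I(f)=\{\mathcal O\subseteq\Omega:\bigcap_{A\in\mathcal O}Q_A\ne\emptyset\}$. Let $\Psi_{(n,m)}$ be the set of indifference complexes of affine maximizers. With $\mathrm{Cd}(a,b)=\big||a|_1-|b|_1\big|$, define $\mu_c(n,m)=\min_{\mathcal I\in\Psi_{(n,m)}}\max\{\mathrm{Cd}(A_i,B_i): A,B\in F\text{ for some }F\in\mathcal I,\ i\in[n]\}$. *)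

(* Defs.v *)
From HB Require Import structures.
From mathcomp Require Import all_boot all_order all_algebra.
From mathcomp Require Import reals.
Set Implicit Arguments. Unset Strict Implicit. Unset Printing Implicit Defensive.
Import Order.TTheory GRing.Theory Num.Theory.
Local Open Scope ring_scope.

(* Allocations Omega: each item j : 'I_m is given to exactly one player A j : 'I_n.
   This is the 0/1 matrix A with A_{i,j} = 1 iff A j = i (column sums are 1). *)
Definition alloc (n m : nat) := {ffun 'I_m -> 'I_n}.

Definition bundle n m (A : alloc n m) (i : 'I_n) : {set 'I_m} := [set j | A j == i].

Definition am_value (R : realType) n m (w : 'I_n -> R) (c : alloc n m -> R)
  (theta : 'M[R]_(n, m)) (A : alloc n m) : R :=
  c A + \sum_(i < n) w i * \sum_(j in bundle A i) theta i j.

Definition affine_maximizer (R : realType) n m (f : 'M[R]_(n, m) -> alloc n m) : Prop :=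
  exists (w : 'I_n -> R) (c : alloc n m -> R),
    (forall i, w i != 0) /\
    forall theta (B : alloc n m), am_value w c theta B <= am_value w c theta (f theta).

(* theta belongs to the difference set Q_A = closure {theta' | f theta' = A}
   (closure in the Euclidean topology of R^{n x m}, written with entrywise balls) *)
Definition in_diff_set (R : realType) n m (f : 'M[R]_(n, m) -> alloc n m)
  (A : alloc n m) (theta : 'M[R]_(n, m)) : Prop :=
  forall e : R, 0 < e -> exists theta', f theta' = A /\
    forall i j, `|theta' i j - theta i j| < e.

Definition is_indiff_complex (R : realType) n m (f : 'M[R]_(n, m) -> alloc n m)
  (I : {set {set alloc n m}}) : Prop :=
  forall O : {set alloc n m},
    O \in I <-> exists theta, forall A, A \in O -> in_diff_set f A theta.

Definition in_Psi (R : realType) n m (I : {set {set alloc n m}}) : Prop :=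
  exists f : 'M[R]_(n, m) -> alloc n m, affine_maximizer f /\ is_indiff_complex f I.

Definition Cd n m (A B : alloc n m) (i : 'I_n) : nat :=
  `|(#|bundle A i|)%:Z - (#|bundle B i|)%:Z|%N.

(* max { Cd(A_i,B_i) : A,B in F for some F in I, i in [n] } (0 if empty) *)
Definition card_sens n m (I : {set {set alloc n m}}) : nat :=
  \max_(F in I) \max_(A in F) \max_(B in F) \max_(i < n) Cd A B i.

(* Main.v *)
Require Import Defs.
From mathcomp Require Import all_boot all_order all_algebra.
From mathcomp Require Import reals.
From mathcomp Require Import boolp zify ring lra.
Set Implicit Arguments. Unset Strict Implicit. Unset Printing Implicit Defensive.
Import Order.TTheory GRing.Theory Num.Theory.
Local Open Scope ring_scope.

Section S.
Variables (R : realType) (n m : nat).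

Definition w1 : 'I_n -> R := fun _ => 1.
Definition sq (X : alloc n m) : R := \sum_(p < n) (#|bundle X p|%:R) ^+ 2.
Definition cc (X : alloc n m) : R := - sq X.
Definition vl (th : 'M[R]_(n, m)) X := am_value w1 cc th X.

Lemma lin_part (th : 'M[R]_(n, m)) (X : alloc n m) :
  \sum_(i < n) w1 i * \sum_(j in bundle X i) th i j = \sum_(j < m) th (X j) j.
Proof.
under eq_bigr do rewrite /w1 mul1r.
rewrite (exchange_big_dep xpredT) //=.
apply: eq_bigr => j _.
rewrite (big_pred1 (X j)) // => i.
by rewrite /bundle inE eq_sym.
Qed.

Lemma vlE th X : vl th X = cc X + \sum_(j < m) th (X j) j.
Proof. by rewrite /vl /am_value lin_part. Qed.

Lemma vl_cont th th' X :
  `|vl th' X - vl th X| <= \sum_(j < m) \sum_(i < n) `|th' i j - th i j|.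
Proof.
rewrite !vlE opprD addrACA subrr add0r -sumrB.
apply: le_trans (ler_norm_sum _ _ _) _.
apply: ler_sum => j _.
by rewrite (bigD1 (X j)) //= lerDl sumr_ge0.
Qed.


Definition fam (A0 : alloc n m) (t : 'M[R]_(n, m)) : alloc n m :=
  [arg max_(X > A0) vl t X]%O.

Lemma fam_opt A0 t B : vl t B <= vl t (fam A0 t).
Proof.
rewrite /fam; case: (arg_maxP (fun X => vl t X) (isT : predT A0)) => X _ H.
exact: H.
Qed.

Lemma opt_of_diff A0 th A : in_diff_set (fam A0) A th ->
  forall B, vl th B <= vl th A.
Proof.
move=> HA B; rewrite leNgt; apply/negP => Hlt.
set g := vl th B - vl th A.
have gpos : 0 < g by rewrite subr_gt0.
set K : R := (n * m)%:R.
have K0 : 0 <= K by [].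
set e := g / (2 * K + 1).
have epos : 0 < e by rewrite divr_gt0 // ltr_wpDl // mulr_ge0.
have he : 2 * (e * K) + e = g.
  rewrite /e; field; lra.
have [th' [fth' Hth']] := HA e epos.
have bnd X : `|vl th' X - vl th X| <= e * K.
  apply: le_trans (vl_cont _ _ _) _.
  apply: (@le_trans _ _ (\sum_(j < m) \sum_(i < n) e)).
    apply: ler_sum => j _; apply: ler_sum => i _; exact: ltW.
  by rewrite /K !sumr_const !card_ord -mulrnA mulr_natr mulnC.
have := fam_opt A0 th' B; rewrite fth' => Hle.
move: (bnd A) (bnd B); rewrite !ler_norml => /andP[a1 a2] /andP[b1 b2].
rewrite /g in he; lra.
Qed.

Lemma card_upd (X Y : alloc n m) j p : (forall k, k != j -> X k = Y k) ->
  (#|bundle X p| + (Y j == p) = #|bundle Y p| + (X j == p))%N.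
Proof.
move=> H.
rewrite (cardsD1 j (bundle X p)) (cardsD1 j (bundle Y p)).
have -> : bundle X p :\ j = bundle Y p :\ j.
  apply/setP=> k; rewrite !inE; case: (eqVneq k j) => //= hk.
  by rewrite H.
rewrite /bundle !inE; move: (nat_of_bool (X j == p)) (nat_of_bool (Y j == p)) (#|_ :\ j|) => a b s; lia.
Qed.

Lemma sq_split (X : alloc n m) i q : q != i ->
  sq X = (#|bundle X i|%:R) ^+ 2 + (#|bundle X q|%:R) ^+ 2 +
    \sum_(p < n | (p != i) && (p != q)) (#|bundle X p|%:R) ^+ 2.
Proof.
move=> hq; rewrite /sq (bigD1 i) //= (bigD1 q) /= ?hq // addrA; done.
Qed.

Lemma swap_contra th (A B : alloc n m) i :
  (forall X, vl th X <= vl th A) -> (forall X, vl th X <= vl th B) ->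
  (#|bundle B i| + uphalf m + 1 <= #|bundle A i|)%N -> False.
Proof.
move=> HA HB Hc.
have : ~~ (bundle A i \subset bundle B i).
  apply/negP => /subset_leq_card; lia.
case/subsetPn => j; rewrite /bundle !inE => /eqP jA jnB.
set q := B j.
have hq : q != i by [].
pose C : alloc n m := [ffun k => if k == j then q else A k].
pose D : alloc n m := [ffun k => if k == j then i else B k].
have lin : \sum_(k < m) th (C k) k + \sum_(k < m) th (D k) k =
           \sum_(k < m) th (A k) k + \sum_(k < m) th (B k) k.
  rewrite -!big_split; apply: eq_bigr => k _; rewrite !ffunE.
  case: (eqVneq k j) => [->|hk]; last by [].
  by rewrite jA /q; exact: addrC.
have CA : forall k, k != j -> C k = A k by move=> k hk; rewrite ffunE (negbTE hk).
have DB : forall k, k != j -> D k = B k by move=> k hk; rewrite ffunE (negbTE hk).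
have Cj : C j = q by rewrite ffunE eqxx.
have Dj : D j = i by rewrite ffunE eqxx.
have ci := card_upd i CA; have cq := card_upd q CA.
have di := card_upd i DB; have dq := card_upd q DB.
have Bj : B j = q by [].
have iq : (i == q) = false by rewrite eq_sym (negbTE hq).
rewrite Cj Dj jA Bj eqxx (negbTE hq) iq in ci cq di dq.
have disj : (#|bundle A i| + #|bundle A q| <= m)%N.
  rewrite -cardsUI.
  have -> : bundle A i :&: bundle A q = set0.
    apply/setP => k; rewrite !inE; apply/negP => /andP[/eqP -> /eqP h].
    by move: hq; rewrite h eqxx.
  by rewrite cards0 addn0 -[X in (_ <= X)%N](card_ord m) max_card.
have hm : (m <= (uphalf m).*2)%N.
  rewrite uphalf_half; have := odd_double_half m; lia.
have rest : \sum_(p < n | (p != i) && (p != q)) (#|bundle C p|%:R : R) ^+ 2 +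
            \sum_(p < n | (p != i) && (p != q)) (#|bundle D p|%:R : R) ^+ 2 =
            \sum_(p < n | (p != i) && (p != q)) (#|bundle A p|%:R : R) ^+ 2 +
            \sum_(p < n | (p != i) && (p != q)) (#|bundle B p|%:R : R) ^+ 2.
  congr (_ + _); apply: eq_bigr => p /andP[h1 h2].
    have nqp : (q == p) = false by rewrite eq_sym (negbTE h2).
    have nip : (i == p) = false by rewrite eq_sym (negbTE h1).
    have := card_upd p CA; rewrite Cj jA nqp nip.
    by rewrite !addn0 => ->.
  have nqp : (q == p) = false by rewrite eq_sym (negbTE h2).
  have nip : (i == p) = false by rewrite eq_sym (negbTE h1).
  have := card_upd p DB; rewrite Dj Bj nqp nip.
  by rewrite !addn0 => ->.
have sqlt : sq C + sq D < sq A + sq B.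
  rewrite !(sq_split _ hq).
  move: rest.
  set rC := \sum_(p < n | _) _; set rD := \sum_(p < n | _) _.
  set rA := \sum_(p < n | _) _; set rB := \sum_(p < n | _) _.
  move=> rest.
  move: ci cq di dq disj hm Hc.
  set x := #|bundle A i|; set y := #|bundle B i|; set u := #|bundle A q|;
  set v := #|bundle B q|; set x' := #|bundle C i|; set y' := #|bundle D i|;
  set u' := #|bundle C q|; set v' := #|bundle D q|; set h := uphalf m.
  move=> ci cq di dq disj hm Hc.
  rewrite eqxx in cq dq.
  have key : (u + y + 1 <= x' + v')%N by lia.
  have ex : x = (x' + 1)%N by lia.
  have eu : u' = (u + 1)%N by lia.
  have ey : y' = (y + 1)%N by lia.
  have ev : v = (v' + 1)%N by lia.
  have key' : ((u + y + 1)%N%:R : R) <= (x' + v')%N%:R by rewrite ler_nat.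
  rewrite !natrD in key'.
  rewrite ex eu ey ev !natrD !sqrrD !mulr1 !expr1n !mulr2n.
  lra.
have := HA C; have := HB D; rewrite !vlE /cc; lra.
Qed.
End S.

Theorem mainTheorem10 (R : realType) (n m : nat) :
  (2 <= n)%N -> (1 <= m)%N ->
  exists I : {set {set alloc n m}}, in_Psi R I /\ (card_sens I <= uphalf m)%N.
Proof.
move=> hn hm.
have h0 : (0 < n)%N by lia.
pose A0 : alloc n m := [ffun=> Ordinal h0].
pose f := @fam R n m A0.
pose I := [set O : {set alloc n m} |
  `[< exists th, forall A, A \in O -> in_diff_set f A th >]].
exists I; split.
  exists f; split.
    exists (@w1 R n), (@cc R n m); split.
      by move=> i; rewrite /w1 oner_neq0.
    move=> th B; exact: (@fam_opt R n m A0 th B).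
  move=> O; rewrite inE; split.
    by move/asboolP.
  by move=> H; apply/asboolP.
apply/bigmax_leqP => F; rewrite inE => /asboolP [th Hth].
apply/bigmax_leqP => A hA; apply/bigmax_leqP => B hB.
apply/bigmax_leqP => i _.
have oA := @opt_of_diff R n m A0 th A (Hth A hA).
have oB := @opt_of_diff R n m A0 th B (Hth B hB).
have t1 : ~~ (#|bundle B i| + uphalf m + 1 <= #|bundle A i|)%N.
  by apply/negP => H; exact: (swap_contra oA oB H).
have t2 : ~~ (#|bundle A i| + uphalf m + 1 <= #|bundle B i|)%N.
  by apply/negP => H; exact: (swap_contra oB oA H).
rewrite -ltnNge in t1; rewrite -ltnNge in t2.
rewrite /Cd; lia.
Qed.
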